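(* Let $R$ be a ring with identity and let $e$ be an idempotent of $R$. If $R$ is SSP, then the ring $eRe$ (with identity $e$) is also SSP.
   Context: Rings are associative with identity. A ring $S$ is right SSP if the sum of any two direct summands of the right module $S_S$ is again a direct summand of $S_S$; left SSP is defined analogously with ${}_SS$; $S$ is SSP if it is both right and left SSP. (Right SSP and left SSP are equivalent conditions.) *)

(* Defs.v *)
From HB Require Import structures.
From mathcomp Require Import all_boot all_algebra.
Set Implicit Arguments.
Unset Strict Implicit.
Unset Printing Implicit Defensive.
Import GRing.Theory.
Local Open Scope ring_scope.

Section SSP.
Variable S : pzRingType.

Definition right_submodule (A : S -> Prop) : Prop :=
  [/\ A 0, (forall x y, A x -> A y -> A (x + y)) & (forall x s, A x -> A (x * s))].

Definition left_submodule (A : S -> Prop) : Prop :=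
  [/\ A 0, (forall x y, A x -> A y -> A (x + y)) & (forall x s, A x -> A (s * x))].

Definition sum_sub (A B : S -> Prop) : S -> Prop :=
  fun z => exists a b, [/\ A a, B b & z = a + b].

Definition right_summand (A : S -> Prop) : Prop :=
  right_submodule A /\
  exists C : S -> Prop, [/\ right_submodule C,
    (forall z, sum_sub A C z) & (forall z, A z -> C z -> z = 0)].

Definition left_summand (A : S -> Prop) : Prop :=
  left_submodule A /\
  exists C : S -> Prop, [/\ left_submodule C,
    (forall z, sum_sub A C z) & (forall z, A z -> C z -> z = 0)].

Definition right_SSP : Prop :=
  forall A B, right_summand A -> right_summand B -> right_summand (sum_sub A B).

Definition left_SSP : Prop :=
  forall A B, left_summand A -> left_summand B -> left_summand (sum_sub A B).

Definition SSP : Prop := right_SSP /\ left_SSP.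
End SSP.

Section Corner.
Variables (R : pzRingType) (e : R) (he : e * e = e).

(* the dependency on the idempotence proof makes the ring structure
   canonical on [corner he] *)
Definition eRe of e * e = e := {x : R | e * x * e == x}.
Local Notation corner := (eRe he).
HB.instance Definition _ := [Choice of corner by <:].

Lemma corner_key (x : R) : e * (e * x * e) * e == e * x * e.
Proof. by rewrite !mulrA he -mulrA he. Qed.

Definition cproj (x : R) : corner := exist _ (e * x * e) (corner_key x).

Definition czero : corner := cproj 0.
Definition copp (x : corner) : corner := cproj (- val x).
Definition cadd (x y : corner) : corner := cproj (val x + val y).
Definition cone : corner := cproj 1.
Definition cmul (x y : corner) : corner := cproj (val x * val y).

Lemma cprojK (x : corner) : cproj (val x) = x.
Proof. by apply: val_inj; case: x => x /= /eqP. Qed.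

Lemma cval_proj x : val (cproj x) = e * x * e. Proof. by []. Qed.

Lemma cval_id (x : corner) : e * val x * e = val x.
Proof. by case: x => x /= /eqP. Qed.

Lemma cvalD (x y : corner) : e * (val x + val y) * e = val x + val y.
Proof. by rewrite mulrDr mulrDl !cval_id. Qed.

Lemma caddE (x y : corner) : val (cadd x y) = val x + val y.
Proof. exact: cvalD. Qed.

Lemma caddA : associative cadd.
Proof. by move=> x y z; apply: val_inj; rewrite !caddE addrA. Qed.
Lemma caddC : commutative cadd.
Proof. by move=> x y; apply: val_inj; rewrite /= addrC. Qed.
Lemma cadd0 : left_id czero cadd.
Proof.
move=> x; apply: val_inj; rewrite caddE cval_proj mulr0 mul0r add0r.
by [].
Qed.
Lemma caddN : left_inverse czero copp cadd.
Proof.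
move=> x; apply: val_inj; rewrite caddE.
have -> : val (copp x) = - val x by rewrite cval_proj mulrN mulNr cval_id.
by rewrite addNr cval_proj mulr0 mul0r.
Qed.

HB.instance Definition _ := GRing.isZmodule.Build corner caddA caddC cadd0 caddN.

Lemma caddE' (x y : corner) : val (x + y) = val x + val y.
Proof. exact: caddE. Qed.

Lemma cvalM (x y : corner) : e * (val x * val y) * e = val x * val y.
Proof.
by rewrite -(cval_id x) -(cval_id y) !mulrA he -!mulrA he !mulrA.
Qed.

Lemma cmulE (x y : corner) : val (cmul x y) = val x * val y.
Proof. exact: cvalM. Qed.

Lemma cmulA : associative cmul.
Proof. by move=> x y z; apply: val_inj; rewrite !cmulE mulrA. Qed.
Lemma coneE : val cone = e.
Proof. by rewrite cval_proj mulr1 he. Qed.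
Lemma cmul1 : left_id cone cmul.
Proof.
move=> x; apply: val_inj; rewrite cmulE coneE.
by rewrite -[in LHS](cval_id x) !mulrA he cval_id.
Qed.
Lemma cmulr1 : right_id cone cmul.
Proof.
move=> x; apply: val_inj; rewrite cmulE coneE.
by rewrite -[in LHS](cval_id x) -!mulrA he !mulrA cval_id.
Qed.
Lemma cmulDl : left_distributive cmul (@GRing.add corner).
Proof.
move=> x y z; apply: val_inj.
by rewrite cmulE !caddE' !cmulE mulrDl.
Qed.
Lemma cmulDr : right_distributive cmul (@GRing.add corner).
Proof.
move=> x y z; apply: val_inj.
by rewrite cmulE !caddE' !cmulE mulrDr.
Qed.

HB.instance Definition _ :=
  GRing.Zmodule_isPzRing.Build corner cmulA cmul1 cmulr1 cmulDl cmulDr.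

Lemma corner_oneE : val (1 : corner) = e.
Proof. exact: coneE. Qed.
Lemma corner_mulE (x y : corner) : val (x * y) = val x * val y.
Proof. exact: cmulE. Qed.
Lemma corner_addE (x y : corner) : val (x + y) = val x + val y.
Proof. exact: caddE'. Qed.
End Corner.

(* Main.v *)
Require Import Defs.
From HB Require Import structures.
From mathcomp Require Import all_boot all_algebra.
Local Open Scope ring_scope.
Import GRing.Theory.

Section Gen.
Variable S : pzRingType.

Lemma L1 (A : S -> Prop) : right_summand A ->
  exists f : S, f * f = f /\ forall z, A z <-> f * z = z.
Proof.
case=> [[A0 AD AM] [C [[C0 CD CM] Hs Hi]]].
have [f [g [Af Cg E1]]] := Hs 1.
have key : forall a, A a -> f * a = a.
  move=> a Aa.
  have Ha : a = f * a + g * a by rewrite -mulrDl -E1 mul1r.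
  have Cga : C (g * a) by apply: CM.
  have Aga : A (g * a).
    have -> : g * a = a + (f * a) * (-1) by (rewrite mulrN1; apply/eqP; rewrite eq_sym subr_eq; apply/eqP; rewrite [RHS]addrC -Ha).
    by apply: AD => //; apply: (AM); apply: (AM).
  by rewrite {2}Ha (Hi _ Aga Cga) addr0.
exists f; split; first exact: key.
move=> z; split; first exact: key.
by move=> <-; apply: AM.
Qed.

Lemma L2 (f : S) : f * f = f -> right_summand (fun z => f * z = z).
Proof.
move=> ff; split.
  split; first by rewrite mulr0.
  - by move=> x y Hx Hy; rewrite mulrDr Hx Hy.
  - by move=> x s Hx; rewrite mulrA Hx.
exists (fun z => f * z = 0); split.
- split; first by rewrite mulr0.
  + by move=> x y Hx Hy; rewrite mulrDr Hx Hy addr0.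
  + by move=> x s Hx; rewrite mulrA Hx mul0r.
- move=> z; exists (f * z), (z - f * z); split.
  + by rewrite mulrA ff.
  + by rewrite mulrBr mulrA ff subrr.
  + by rewrite addrC subrK.
- by move=> z H1 H2; rewrite -H1.
Qed.

Lemma L3 (A B : S -> Prop) : (forall z, A z <-> B z) ->
  right_summand A -> right_summand B.
Proof.
move=> E [[A0 AD AM] [C [HC Hs Hi]]]; split.
  split; first by apply/E.
  - by move=> x y /E Hx /E Hy; apply/E; apply: AD.
  - by move=> x s /E Hx; apply/E; apply: AM.
exists C; split => //.
- move=> z; have [a [b [Aa Cb ->]]] := Hs z.
  by exists a, b; split => //; apply/E.
- by move=> z /E Az Cz; apply: Hi.
Qed.
End Gen.

Section GenL.
Variable S : pzRingType.

Lemma LL1 (A : S -> Prop) : left_summand A ->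
  exists f : S, f * f = f /\ forall z, A z <-> z * f = z.
Proof.
move=> H; have := @L1 S^c A H.
by case=> f [ff Hf]; exists f; split.
Qed.

Lemma LL2 (f : S) : f * f = f -> left_summand (fun z => z * f = z).
Proof. move=> ff; exact: (@L2 S^c f ff). Qed.

Lemma LL3 (A B : S -> Prop) : (forall z, A z <-> B z) ->
  left_summand A -> left_summand B.
Proof. move=> E H; exact: (@L3 S^c A B E H). Qed.
End GenL.

Section Corn.
Variables (R : pzRingType) (e : R) (he : e * e = e).

Lemma cvall (x : eRe he) : e * val x = val x.
Proof. by rewrite -(cval_id x) !mulrA he. Qed.
Lemma cvalr (x : eRe he) : val x * e = val x.
Proof. by rewrite -(cval_id x) -!mulrA he. Qed.

Lemma right_part : right_SSP R -> right_SSP (eRe he).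
Proof.
move=> HR A B /(@L1 _ _) [f [ff Ef]] /(@L1 _ _) [g [gg Eg]].
set F := val f; set G := val g.
have FF : F * F = F by rewrite /F -corner_mulE ff.
have GG : G * G = G by rewrite /G -corner_mulE gg.
have eF : e * F = F := cvall f.
have eG : e * G = G := cvall g.
have Fe : F * e = F := cvalr f.
have Ge : G * e = G := cvalr g.
have [h [hh Eh]] := @L1 R _ (HR _ _ (@L2 R F FF) (@L2 R G GG)).
have eh : e * h = h.
  have := proj2 (Eh h) hh; rewrite /sum_sub => -[X [Y [HX HY HE]]]; rewrite HE.
  by rewrite mulrDr -HX -HY !mulrA eF eG.
set k := cproj he h.
have vk : val k = h * e by rewrite /k cval_proj eh.
have kk : k * k = k.
  by apply: val_inj; rewrite corner_mulE vk mulrA -(mulrA h e h) eh hh.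
apply: (@L3 _ _ _ _ (@L2 _ k kk)) => z; apply: iff_sym; split.
- move=> [a [b [/Ef Ha /Eg Hb ->]]].
  apply: val_inj; rewrite corner_mulE vk -mulrA cvall.
  have : (h * val (a + b) = val (a + b)).
    apply/Eh; exists (val a), (val b); split => //.
    + by rewrite -corner_mulE Ha.
    + by rewrite -corner_mulE Hb.
    + exact: corner_addE.
  by [].
- move=> Hk.
  have hz : h * val z = val z.
    by rewrite -{2}Hk corner_mulE vk -mulrA cvall.
  have := proj2 (Eh (val z)) hz; rewrite /sum_sub => -[X [Y [HX HY EZ]]].
  have eX : e * X = X by rewrite -HX mulrA cvall.
  have eY : e * Y = Y by rewrite -HY mulrA cvall.
  exists (cproj he X), (cproj he Y); split.
  + apply/Ef; apply: val_inj; rewrite corner_mulE !cval_proj eX mulrA.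
    by rewrite -/F HX.
  + apply/Eg; apply: val_inj; rewrite corner_mulE !cval_proj eY mulrA.
    by rewrite -/G HY.
  + apply: val_inj; rewrite corner_addE !cval_proj -mulrDl -mulrDr -EZ.
    by rewrite cval_id.
Qed.

Lemma left_part : left_SSP R -> left_SSP (eRe he).
Proof.
move=> HR A B /(@LL1 _ _) [f [ff Ef]] /(@LL1 _ _) [g [gg Eg]].
set F := val f; set G := val g.
have FF : F * F = F by rewrite /F -corner_mulE ff.
have GG : G * G = G by rewrite /G -corner_mulE gg.
have eF : e * F = F := cvall f.
have eG : e * G = G := cvall g.
have Fe : F * e = F := cvalr f.
have Ge : G * e = G := cvalr g.
have [h [hh Eh]] := @LL1 R _ (HR _ _ (@LL2 R F FF) (@LL2 R G GG)).
have eh : h * e = h.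
  have := proj2 (Eh h) hh; rewrite /sum_sub => -[X [Y [HX HY HE]]]; rewrite HE.
  by rewrite mulrDl -HX -HY -!mulrA Fe Ge.
set k := cproj he h.
have vk : val k = e * h by rewrite /k cval_proj -mulrA eh.
have kk : k * k = k.
  by apply: val_inj; rewrite corner_mulE vk -mulrA (mulrA h e h) eh hh.
apply: (@LL3 _ _ _ _ (@LL2 _ k kk)) => z; apply: iff_sym; split.
- move=> [a [b [/Ef Ha /Eg Hb ->]]].
  apply: val_inj; rewrite corner_mulE vk mulrA cvalr.
  have : (val (a + b) * h = val (a + b)).
    apply/Eh; exists (val a), (val b); split => //.
    + by rewrite -corner_mulE Ha.
    + by rewrite -corner_mulE Hb.
    + exact: corner_addE.
  by [].
- move=> Hk.
  have hz : val z * h = val z.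
    by rewrite -{2}Hk corner_mulE vk mulrA cvalr.
  have := proj2 (Eh (val z)) hz; rewrite /sum_sub => -[X [Y [HX HY EZ]]].
  have eX : X * e = X by rewrite -HX -mulrA cvalr.
  have eY : Y * e = Y by rewrite -HY -mulrA cvalr.
  exists (cproj he X), (cproj he Y); split.
  + apply/Ef; apply: val_inj; rewrite corner_mulE !cval_proj -(mulrA e X e) eX -mulrA.
    by rewrite -/F HX.
  + apply/Eg; apply: val_inj; rewrite corner_mulE !cval_proj -(mulrA e Y e) eY -mulrA.
    by rewrite -/G HY.
  + apply: val_inj; rewrite corner_addE !cval_proj -mulrDl -mulrDr -EZ.
    by rewrite cval_id.
Qed.
End Corn.

Theorem theorem2p11 (R : pzRingType) (e : R) (he : e * e = e) :
  SSP R -> SSP (eRe he).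
Proof.
case=> HR HL; split; [exact: right_part | exact: left_part].
Qed.
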